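(* Let $1\le p\le\infty$ and let $A,B\in\mathcal{B}_F$ with $L_a,L_b>0$. Then $$d_p\big(\psi(A),\psi(B)\big)\le\frac{4\,n_{\max}^{1-\frac1p}\,d_p(A,B)}{L_{\max}}=2r_p(A,B).$$
   Context: A persistence barcode is a finite multiset of intervals $[x,y]$, $x\le y$; $\mathcal{B}_F$ is the set of barcodes all of whose intervals have finite endpoints. For $A=\{[x_i^a,y_i^a]\}_{i=1}^{n_a}$, $\ell_i^a=y_i^a-x_i^a$, $L_a=\sum_i\ell_i^a$; similarly for $B$; $n_{\max}=\max\{n_a,n_b\}$, $L_{\max}=\max\{L_a,L_b\}$. The projection $\psi$ sends $A$ to $\psi(A)=\{[0,\ell_i^a/L_a]\}_{i=1}^{n_a}$. $p$-th Wasserstein distance: pad the smaller barcode with zero-length intervals $[t,t]$ until both have $n_{\max}$ intervals; $d_p(A,B)=\big(\min_\gamma\sum_i\max\{|x_i^a-x^b_{\gamma(i)}|^p,|y_i^a-y^b_{\gamma(i)}|^p\}\big)^{1/p}$ for $p<\infty$, $d_\infty(A,B)=\min_\gamma\max_i\max\{|x_i^a-x^b_{\gamma(i)}|,|y_i^a-y^b_{\gamma(i)}|\}$, minima over bijections $\gamma$ (and paddings). Relative error $r_p(A,B)=2n_{\max}^{1-1/p}d_p(A,B)/L_{\max}$, with $n_{\max}^{1-1/\infty}=n_{\max}$. *)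

(* Defs.v *)
From HB Require Import structures.
From mathcomp Require Import all_boot all_order all_algebra.
From mathcomp Require Import all_classical all_reals all_analysis.
Set Implicit Arguments. Unset Strict Implicit. Unset Printing Implicit Defensive.
Import Order.TTheory GRing.Theory Num.Theory.
Local Open Scope ring_scope.

Section Barcodes.
Variable R : realType.

(* A barcode with finite endpoints: a finite multiset of intervals [x,y],
   represented as a sequence of pairs (x,y) (order irrelevant). *)
Definition barcode := seq (R * R).
Definition is_barcode (A : barcode) : bool := all (fun iv => iv.1 <= iv.2) A.

Definition bar_len (A : barcode) : R := \sum_(iv <- A) (iv.2 - iv.1).
Definition nmax (A B : barcode) : nat := maxn (size A) (size B).
Definition Lmax (A B : barcode) : R := Num.max (bar_len A) (bar_len B).

Definition psi (A : barcode) : barcode :=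
  [seq (0, (iv.2 - iv.1) / bar_len A) | iv <- A].

Definition icost (iv jv : R * R) : R := Num.max `|iv.1 - jv.1| `|iv.2 - jv.2|.

Definition match_cost (p : \bar R) (A B : barcode) : R :=
  match p with
  | EFin r => (\sum_(IJ <- zip A B) Num.max (`|IJ.1.1 - IJ.2.1| `^ r)
                                            (`|IJ.1.2 - IJ.2.2| `^ r)) `^ r^-1
  | _ => \big[Num.max/0]_(IJ <- zip A B) icost IJ.1 IJ.2
  end.

Definition diag (ts : seq R) : barcode := [seq (t, t) | t <- ts].

(* p-Wasserstein distance: infimum over paddings of both barcodes by
   zero-length intervals [t,t] up to n_max intervals, and over bijections
   (a bijection = a reordering B'' of the padded B, matched by position). *)
Definition dW (p : \bar R) (A B : barcode) : R :=
  inf [set c : R | exists (ta tb : seq R) (B'' : barcode),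
         [/\ size ta = (nmax A B - size A)%N,
             size tb = (nmax A B - size B)%N,
             perm_eq B'' (B ++ diag tb) &
             c = match_cost p (A ++ diag ta) B'']].

Definition nexp (p : \bar R) (n : nat) : R :=
  match p with
  | EFin r => (n%:R) `^ (1 - r^-1)
  | _ => n%:R
  end.

Definition relerr (p : \bar R) (A B : barcode) : R :=
  2 * nexp p (nmax A B) * dW p A B / Lmax A B.

End Barcodes.

(* Main.v *)
Require Import Defs.
From HB Require Import structures.
From mathcomp Require Import all_boot all_order all_algebra.
From mathcomp Require Import all_classical all_reals all_analysis.
Import Order.TTheory GRing.Theory Num.Theory.
Local Open Scope ring_scope.

From mathcomp Require Import ring lra.
Set Implicit Arguments. Unset Strict Implicit. Unset Printing Implicit Defensive.

Section J.
Variable R : realType.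

Lemma conv2 (r t x y : R) : 1 <= r -> 0 <= t -> t <= 1 -> 0 <= x -> 0 <= y ->
  (t * x + (1 - t) * y) `^ r <= t * x `^ r + (1 - t) * y `^ r.
Proof.
move=> r1 t0 t1 x0 y0.
have := @convex_powR R r r1 (Itv01 t0 t1) x y.
rewrite !inE /= !in_itv /= !andbT => /(_ x0 y0).
by rewrite !convRE /=.
Qed.

Lemma jensen (r : R) (xs : seq R) : 1 <= r -> all (fun x => 0 <= x) xs ->
  (\sum_(x <- xs) x) `^ r <= (size xs)%:R `^ (r - 1) * \sum_(x <- xs) x `^ r.
Proof.
move=> r1; have r0 : r != 0 by rewrite gt_eqF // (lt_le_trans _ r1).
elim: xs => [|x xs IH] /=.
  by rewrite !big_nil powR0 // mulr0.
move=> /andP[x0 xs0]; have {}IH := IH xs0.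
have S0 : 0 <= \sum_(y <- xs) y by rewrite big_seq; apply: sumr_ge0 => i; exact: (allP xs0).
have [->|xsne] := eqVneq xs [::].
  by rewrite !big_cons !big_nil !addr0 /= powR1 mul1r.
set n := size xs in IH *.
have n0 : (0 : R) < n%:R by rewrite ltr0n lt0n size_eq0.
set S := \sum_(z <- xs) z in IH S0 *.
set T := \sum_(z <- xs) z `^ r in IH *.
rewrite !big_cons -/S -/T.
set t := (n.+1%:R : R)^-1.
have t0 : 0 <= t by rewrite invr_ge0.
have t1 : t <= 1 by rewrite invf_le1 // ler1n.
have e : x + S = n.+1%:R * (t * x + (1 - t) * (S / n%:R)).
  rewrite /t -natr1; field.
  by rewrite gt_eqF //= gt_eqF // addr_gt0.
rewrite e powRM //; last first.
  by rewrite addr_ge0 // mulr_ge0 // ?subr_ge0 // divr_ge0 // ltW.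
apply: le_trans.
  apply: ler_wpM2l; first exact: powR_ge0.
  apply: conv2 => //; exact: divr_ge0 (ltW n0).
have hm : (S / n%:R) `^ r <= T / n%:R.
  have np : 0 < n%:R `^ (r - 1) by rewrite powR_gt0.
  rewrite ler_pdivlMr // -(ler_pM2l np) mulrCA [_ * n%:R]mulrC mulr_powRB1 ?(ltW n0) ?(lt_le_trans _ r1) //.
  by rewrite -powRM ?divfK ?gt_eqF // divr_ge0 // ltW.
have t1' : 0 <= 1 - t by rewrite subr_ge0.
apply: le_trans (ler_wpM2l (powR_ge0 _ _) (lerD (lexx _) (ler_wpM2l t1' hm))) _.
have E1 : (1 - t) * (T / n%:R) = t * T.
  by rewrite /t -natr1; field; rewrite gt_eqF //= gt_eqF // addr_gt0.
rewrite E1 -mulrDr -[in X in X <= _](mulr_powRB1 (x:=n.+1%:R)) ?(lt_le_trans _ r1) //.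
rewrite le_eqVlt; apply/orP; left; apply/eqP; rewrite /t -natr1; field.
by rewrite gt_eqF // addr_gt0.
Qed.
End J.

Section C.
Variable R : realType.

Lemma powr_le_self (w r : R) : 1 <= r -> 0 <= w -> w <= 1 -> w `^ r <= w.
Proof.
move=> r1 w0 w1; have [->|wn0] := eqVneq w 0.
  by rewrite powR0 // gt_eqF // (lt_le_trans _ r1).
by apply: ge1r_powR => //; rewrite lt_neqAle eq_sym wn0 w0.
Qed.

Lemma core_fin (T : eqType) (r L S : R) (s : seq T) (c u w : T -> R) :
  1 <= r -> 0 < L -> S = \sum_(i <- s) c i -> \sum_(i <- s) w i <= 1 ->
  (forall i, i \in s -> [/\ 0 <= c i, 0 <= w i, w i <= 1, 0 <= u i
       & u i <= 2 / L * (c i + w i * S)]) ->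
  (\sum_(i <- s) u i `^ r) `^ r^-1
   <= 4 * (size s)%:R `^ (1 - r^-1) * (\sum_(i <- s) c i `^ r) `^ r^-1 / L.
Proof.
move=> r1 L0 eS sw H.
have r0 : 0 < r by rewrite (lt_le_trans _ r1).
have ri0 : r^-1 != 0 by rewrite invr_eq0 gt_eqF.
have L0' : 0 <= L := ltW L0.
have d0 : 0 <= 2 / L by rewrite divr_ge0.
have [->|sne] := eqVneq s [::].
  by rewrite !big_nil powR0 // mulr0 mul0r.
have N1 : (1 : R) <= (size s)%:R by rewrite ler1n lt0n size_eq0.
set N := (size s)%:R in N1 *.
set C := \sum_(i <- s) c i `^ r.
have C0 : 0 <= C by apply: sumr_ge0 => i _; exact: powR_ge0.
have S0 : 0 <= S by rewrite eS big_seq; apply: sumr_ge0 => i /H [].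
have step1 : \sum_(i <- s) u i `^ r <= \sum_(i <- s) (2 / L) `^ r * (2 `^ (r - 1) * (c i `^ r + w i * S `^ r)).
  rewrite big_seq [X in _ <= X]big_seq; apply: ler_sum => i /H [c0 w0 w1 u0 ub].
  apply: (@le_trans _ _ ((2 / L * (c i + w i * S)) `^ r)).
    by apply: ge0_ler_powR => //; rewrite ?nnegrE ?(ltW r0) // (le_trans u0 ub).
  rewrite powRM ?addr_ge0 ?mulr_ge0 //.
  apply: ler_wpM2l; first exact: powR_ge0.
  have := @jensen R r [:: c i; w i * S] r1.
  rewrite /= !big_cons !big_nil !addr0 c0 mulr_ge0 //= => /(_ isT) /le_trans; apply.
  apply: ler_wpM2l; first exact: powR_ge0.
  rewrite lerD2l powRM //; apply: ler_wpM2r; first exact: powR_ge0.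
  exact: powr_le_self.
  by rewrite invr_ge0.
have step2 : \sum_(i <- s) (2 / L) `^ r * (2 `^ (r - 1) * (c i `^ r + w i * S `^ r))
   = (2 / L) `^ r * (2 `^ (r - 1) * (C + (\sum_(i <- s) w i) * S `^ r)).
  by rewrite -mulr_sumr -mulr_sumr big_split /= mulr_suml.
have SJ : S `^ r <= N `^ (r - 1) * C.
  have := @jensen R r (map c s) r1.
  rewrite !big_map size_map -eS; apply.
  by apply/allP => x /mapP [j /H [cj0 _ _ _ _] ->].
have Nr1 : 1 <= N `^ (r - 1).
  by rewrite -[X in X <= _](powRr0 N) ler_powR // subr_ge0.
have step3 : \sum_(i <- s) u i `^ r <= (4 / L) `^ r * (N `^ (r - 1) * C).
  apply: le_trans step1 _; rewrite step2.
  have -> : (4 / L) `^ r = (2 / L) `^ r * (2 `^ (r - 1) * 2).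
    have -> : 2 `^ (r - 1) * 2 = 2 `^ r :> R by rewrite mulrC mulr_powRB1.
    rewrite -powRM //; congr (_ `^ _).
    by rewrite mulrAC; congr (_ * _); rewrite -natrM.
  rewrite -!mulrA; apply: ler_wpM2l; first exact: powR_ge0.
  apply: ler_wpM2l; first exact: powR_ge0.
  apply: (@le_trans _ _ (C + S `^ r)).
    rewrite lerD2l -[X in _ <= X]mul1r; apply: ler_wpM2r => //; exact: powR_ge0.
  apply: (@le_trans _ _ (N `^ (r - 1) * C + N `^ (r - 1) * C)); last first.
    by set z := N `^ (r - 1) * C; lra.
  apply: lerD => //; rewrite -[X in X <= _]mul1r; exact: ler_wpM2r.
have usum0 : 0 <= \sum_(i <- s) u i `^ r by apply: sumr_ge0 => i _; exact: powR_ge0.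
have step4 : (\sum_(i <- s) u i `^ r) `^ r^-1 <= ((4 / L) `^ r * (N `^ (r - 1) * C)) `^ r^-1.
  apply: ge0_ler_powR => //; first by rewrite invr_ge0 ltW.
  by rewrite nnegrE !mulr_ge0 ?powR_ge0.
apply: le_trans step4 _.
rewrite (@powRM R ((4 / L) `^ r)); [|exact: powR_ge0|by rewrite mulr_ge0 ?powR_ge0].
rewrite (@powRM R (N `^ (r - 1))); [|exact: powR_ge0|exact: C0].
rewrite -!powRrM mulfV ?gt_eqF // powRr1 ?divr_ge0 //.
have -> : (r - 1) * r^-1 = 1 - r^-1 by field; rewrite gt_eqF.
by rewrite le_eqVlt; apply/orP; left; apply/eqP; ring.
Qed.


Lemma bigmax_leP (T : eqType) (s : seq T) (F : T -> R) (x : R) :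
  0 <= x -> (forall i, i \in s -> F i <= x) -> \big[Num.max/0]_(i <- s) F i <= x.
Proof.
move=> x0; elim: s => [|a s IH] H; first by rewrite big_nil.
rewrite big_cons ge_max H ?mem_head //= IH // => i Hi; apply: H.
by rewrite in_cons Hi orbT.
Qed.

Lemma le_bigmaxP (T : eqType) (s : seq T) (F : T -> R) (i : T) :
  i \in s -> F i <= \big[Num.max/0]_(j <- s) F j.
Proof.
elim: s => [|a s IH] //; rewrite in_cons big_cons le_max => /orP [/eqP ->|/IH ->].
  by rewrite lexx.
by rewrite orbT.
Qed.

Lemma bigmax_ge0 (T : eqType) (s : seq T) (F : T -> R) :
  0 <= \big[Num.max/0]_(j <- s) F j.
Proof. by elim: s => [|a s IH]; rewrite ?big_nil ?big_cons ?le_max ?IH ?orbT. Qed.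

Lemma core_inf (T : eqType) (L S : R) (s : seq T) (c u w : T -> R) :
  0 < L -> S = \sum_(i <- s) c i ->
  (forall i, i \in s -> [/\ 0 <= c i, 0 <= w i, w i <= 1, 0 <= u i
       & u i <= 2 / L * (c i + w i * S)]) ->
  \big[Num.max/0]_(i <- s) u i <= 4 * (size s)%:R * \big[Num.max/0]_(i <- s) c i / L.
Proof.
move=> L0 eS H.
set M := \big[Num.max/0]_(i <- s) c i.
have M0 : 0 <= M by apply: bigmax_ge0.
have [->|sne] := eqVneq s [::].
  by rewrite !big_nil /= mulr0 mul0r mul0r.
have N1 : (1 : R) <= (size s)%:R by rewrite ler1n lt0n size_eq0.
have SM : S <= (size s)%:R * M.
  rewrite eS -sum1_size natr_sum mulr_suml big_seq [X in _ <= X]big_seq.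
  by apply: ler_sum => i Hi; rewrite mul1r; apply: le_bigmaxP.
apply: bigmax_leP; first by rewrite !mulr_ge0 ?invr_ge0 ?(ltW L0) // (le_trans ler01 N1).
move=> i /[dup] Hi /H [c0 w0 w1 u0 ub]; apply: le_trans ub _.
have ci : c i <= M by apply: le_bigmaxP.
have S0 : 0 <= S by rewrite eS big_seq; apply: sumr_ge0 => j /H [].
have wS : w i * S <= (size s)%:R * M.
  by apply: le_trans SM; rewrite -[X in _ <= X]mul1r; apply: ler_wpM2r.
have : c i + w i * S <= 2 * ((size s)%:R * M).
  apply: le_trans (lerD ci wS) _.
  have : M <= (size s)%:R * M by rewrite -[X in X <= _]mul1r; apply: ler_wpM2r.
  set z := (size s)%:R * M; lra.
move=> /(ler_wpM2l (divr_ge0 (ler0n R 2) (ltW L0))) /le_trans; apply.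
by rewrite le_eqVlt; apply/orP; left; apply/eqP; ring.
Qed.
End C.

Section K.
Variable R : realType.

Lemma pt_bound (la lb La Lb c S : R) :
  0 <= la -> 0 <= lb -> 0 < La -> 0 < Lb -> `|la - lb| <= 2 * c -> `|La - Lb| <= 2 * S ->
  0 <= S ->
  `|la / La - lb / Lb| <= 2 / Num.max La Lb *
     (c + (if Lb <= La then lb / Lb else la / La) * S).
Proof.
move=> la0 lb0 La0 Lb0 hl hL S0.
case: ifP => hab.
  rewrite max_l //.
  have -> : la / La - lb / Lb = ((la - lb) + lb / Lb * (Lb - La)) / La.
    by field; rewrite !gt_eqF.
  rewrite normrM [`|La^-1|]ger0_norm ?invr_ge0 ?(ltW La0) //.
  rewrite (_ : 2 / La * _ = 2 * (c + lb / Lb * S) * La^-1); last by ring.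
  apply: ler_wpM2r; first by rewrite invr_ge0 ltW.
  apply: le_trans (ler_normD _ _) _.
  rewrite normrM ger0_norm ?divr_ge0 ?(ltW Lb0) // [`|Lb - La|]distrC.
  have b0 : 0 <= lb / Lb by rewrite divr_ge0 // ltW.
  have := ler_wpM2l b0 hL.
  set z := lb / Lb * `|La - Lb|; move: hl; set q := `|la - lb|.
  move=> hq hz; have : lb / Lb * (2 * S) = 2 * (lb / Lb * S) by ring.
  set v := lb / Lb * S; lra.
have hab' : La <= Lb by rewrite leNgt; apply/negP => /ltW; rewrite hab.
rewrite max_r //.
have -> : la / La - lb / Lb = ((la - lb) + la / La * (Lb - La)) / Lb.
  by field; rewrite !gt_eqF.
rewrite normrM [`|Lb^-1|]ger0_norm ?invr_ge0 ?(ltW Lb0) //.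
rewrite (_ : 2 / Lb * _ = 2 * (c + la / La * S) * Lb^-1); last by ring.
apply: ler_wpM2r; first by rewrite invr_ge0 ltW.
apply: le_trans (ler_normD _ _) _.
rewrite normrM [`|la / La|]ger0_norm ?divr_ge0 ?(ltW La0) // [`|Lb - La|]distrC.
have b0 : 0 <= la / La by rewrite divr_ge0 // ltW.
have := ler_wpM2l b0 hL.
set z := la / La * `|La - Lb|; move: hl; set q := `|la - lb|.
move=> hq hz; have : la / La * (2 * S) = 2 * (la / La * S) by ring.
set v := la / La * S; lra.
Qed.


Lemma zip_map2 (S1 S2 T1 T2 : Type) (f : S1 -> T1) (g : S2 -> T2) s t :
  zip (map f s) (map g t) = map (fun IJ => (f IJ.1, g IJ.2)) (zip s t).
Proof. by elim: s t => [|a s IH] [|b t] //=; rewrite IH. Qed.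

Lemma mem_zip1 (S1 S2 : eqType) (s : seq S1) (t : seq S2) IJ :
  IJ \in zip s t -> IJ.1 \in s /\ IJ.2 \in t.
Proof.
elim: s t => [|a s IH] [|b t] //=; rewrite in_cons => /orP [/eqP -> |/IH [h1 h2]] /=.
  by split; [apply/orP; left; apply/eqP|exact: mem_head].
by split; rewrite ?in_cons ?h1 ?h2 orbT.
Qed.

Lemma sum_fst (S1 S2 : Type) (s : seq S1) (t : seq S2) (F : S1 -> R) :
  (size s <= size t)%N -> \sum_(IJ <- zip s t) F IJ.1 = \sum_(x <- s) F x.
Proof. by move=> h; rewrite -[in RHS](unzip1_zip h) big_map. Qed.

Lemma sum_snd (S1 S2 : Type) (s : seq S1) (t : seq S2) (F : S2 -> R) :
  (size t <= size s)%N -> \sum_(IJ <- zip s t) F IJ.2 = \sum_(x <- t) F x.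
Proof. by move=> h; rewrite -[in RHS](unzip2_zip h) big_map. Qed.

Lemma le_sum_mem (T : eqType) (s : seq T) (F : T -> R) x :
  (forall y, y \in s -> 0 <= F y) -> x \in s -> F x <= \sum_(y <- s) F y.
Proof.
move=> H xs; rewrite (perm_big _ (perm_to_rem xs)) big_cons lerDl.
rewrite big_seq; apply: sumr_ge0 => y /mem_rem; exact: H.
Qed.

Lemma maxpow (a b r : R) : 0 <= a -> 0 <= b -> 0 <= r ->
  Num.max (a `^ r) (b `^ r) = (Num.max a b) `^ r.
Proof.
move=> a0 b0 r0; have [ab|ba] := leP a b.
  have h : a `^ r <= b `^ r by apply: ge0_ler_powR; rewrite ?nnegrE.
  by rewrite !max_r.
have ba' := ltW ba.
have h : b `^ r <= a `^ r by apply: ge0_ler_powR; rewrite ?nnegrE.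
by rewrite !max_l.
Qed.

Lemma key (p : \bar R) (A' B' : barcode R) (La Lb : R) :
  (1 <= p)%E -> 0 < La -> 0 < Lb -> size A' = size B' ->
  is_barcode A' -> is_barcode B' ->
  La = bar_len A' -> Lb = bar_len B' ->
  match_cost p (map (fun iv => (0, (iv.2 - iv.1) / La)) A')
               (map (fun iv => (0, (iv.2 - iv.1) / Lb)) B')
   <= 4 * nexp p (size A') * match_cost p A' B' / Num.max La Lb.
Proof.
move=> p1 La0 Lb0 sz bA bB eLa eLb.
set len := fun iv : R * R => iv.2 - iv.1.
set s := zip A' B'.
have ss : size s = size A' by rewrite /s size1_zip // sz.
set c := fun IJ : (R * R) * (R * R) => icost IJ.1 IJ.2.
set S := \sum_(IJ <- s) c IJ.
set u := fun IJ : (R * R) * (R * R) => `|len IJ.1 / La - len IJ.2 / Lb|.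
set w := fun IJ : (R * R) * (R * R) =>
  if Lb <= La then len IJ.2 / Lb else len IJ.1 / La.
have c0 : forall IJ, 0 <= c IJ by move=> IJ; rewrite /c /icost le_max normr_ge0.
have S0 : 0 <= S by apply: sumr_ge0 => IJ _; exact: c0.
have hl : forall IJ, `|len IJ.1 - len IJ.2| <= 2 * c IJ.
  move=> IJ; have -> : len IJ.1 - len IJ.2 = (IJ.1.2 - IJ.2.2) - (IJ.1.1 - IJ.2.1).
    by rewrite /len; ring.
  apply: le_trans (ler_normB _ _) _.
  have h1 : `|IJ.1.2 - IJ.2.2| <= c IJ by rewrite /c /icost le_max lexx orbT.
  have h2 : `|IJ.1.1 - IJ.2.1| <= c IJ by rewrite /c /icost le_max lexx.
  lra.
have eLa' : La = \sum_(IJ <- s) len IJ.1 by rewrite sum_fst ?sz.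
have eLb' : Lb = \sum_(IJ <- s) len IJ.2 by rewrite sum_snd ?sz.
have hL : `|La - Lb| <= 2 * S.
  rewrite eLa' eLb' -sumrB; apply: le_trans (ler_norm_sum _ _ _) _.
  rewrite /S mulr_sumr; apply: ler_sum => IJ _; exact: hl.
have lenA : forall iv, iv \in A' -> 0 <= len iv /\ len iv <= La.
  have h0 : forall iv, iv \in A' -> 0 <= len iv.
    by move=> iv /(allP bA); rewrite /len subr_ge0.
  move=> iv hiv; split; first exact: h0.
  by rewrite eLa; apply: (le_sum_mem (F := len)).
have lenB : forall iv, iv \in B' -> 0 <= len iv /\ len iv <= Lb.
  have h0 : forall iv, iv \in B' -> 0 <= len iv.
    by move=> iv /(allP bB); rewrite /len subr_ge0.
  move=> iv hiv; split; first exact: h0.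
  by rewrite eLb; apply: (le_sum_mem (F := len)).
have hyp : forall IJ, IJ \in s -> [/\ 0 <= c IJ, 0 <= w IJ, w IJ <= 1, 0 <= u IJ
       & u IJ <= 2 / Num.max La Lb * (c IJ + w IJ * S)].
  move=> IJ /mem_zip1 [/lenA [a0 a1] /lenB [b0 b1]]; split => //.
  - by rewrite /w; case: ifP => _; rewrite divr_ge0 // ltW.
  - by rewrite /w; case: ifP => _; rewrite ler_pdivrMr // mul1r.
  - exact: normr_ge0.
  - exact: pt_bound.
have sw : \sum_(IJ <- s) w IJ <= 1.
  rewrite /w; have [h|h] := boolP (Lb <= La); rewrite ?h ?(negbTE h) -mulr_suml -?eLa' -?eLb' mulfV ?gt_eqF //.
rewrite -ss.
case: p p1 => [r||] //= p1; last first.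
  rewrite zip_map2 big_map.
  have -> : \big[Num.max/0]_(IJ <- s) icost ((0:R), len IJ.1 / La) ((0:R), len IJ.2 / Lb)
          = \big[Num.max/0]_(IJ <- s) u IJ.
    apply: eq_bigr => IJ _; rewrite /icost /= subrr normr0 max_r //.
  by apply: (core_inf (S := S) (w := w) (c := c)) => //; rewrite lt_max La0.
have r1 : 1 <= r by rewrite -lee_fin.
have r0 : r != 0 by rewrite gt_eqF // (lt_le_trans _ r1).
rewrite zip_map2 big_map.
have -> : \sum_(IJ <- s) Num.max (`|((0:R), len IJ.1 / La).1 - ((0:R), len IJ.2 / Lb).1| `^ r)
                 (`|((0:R), len IJ.1 / La).2 - ((0:R), len IJ.2 / Lb).2| `^ r)
          = \sum_(IJ <- s) u IJ `^ r.
  apply: eq_bigr => IJ _; rewrite /= subrr normr0 powR0 // max_r //; exact: powR_ge0.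
have -> : \sum_(IJ <- s) Num.max (`|IJ.1.1 - IJ.2.1| `^ r) (`|IJ.1.2 - IJ.2.2| `^ r)
          = \sum_(IJ <- s) c IJ `^ r.
  apply: eq_bigr => IJ _; rewrite maxpow // (le_trans ler01 r1) //.
by apply: (core_fin (S := S) (w := w) (c := c)) => //; rewrite lt_max La0.
Qed.
End K.

Section M.
Variable R : realType.

Lemma map_diag (L : R) (ts : seq R) :
  map (fun iv : R * R => ((0:R), (iv.2 - iv.1) / L)) (diag ts) = diag (nseq (size ts) 0).
Proof. by elim: ts => [|t ts IH] //=; rewrite IH subrr mul0r. Qed.

Lemma diag_barcode (ts : seq R) : is_barcode (diag ts).
Proof. by rewrite /is_barcode all_map; apply/allP => t _ /=. Qed.

Lemma diag_len (ts : seq R) : bar_len (diag ts) = 0.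
Proof. by rewrite /bar_len big_map big1 // => t _; rewrite subrr. Qed.

Lemma match_cost_ge0 (p : \bar R) (A B : barcode R) : 0 <= match_cost p A B.
Proof. by case: p => [r||] /=; rewrite ?powR_ge0 ?bigmax_ge0. Qed.

End M.

Unset Implicit Arguments.

Theorem lemma4 (R : realType) (p : \bar R) (A B : barcode R) :
  (1 <= p)%E -> is_barcode A -> is_barcode B ->
  0 < bar_len A -> 0 < bar_len B ->
  dW p (psi A) (psi B)
    <= 4 * nexp p (nmax A B) * dW p A B / Lmax A B
  /\ 4 * nexp p (nmax A B) * dW p A B / Lmax A B = 2 * relerr p A B.
Proof.
move=> p1 bA bB La0 Lb0.
split; last by rewrite /relerr; ring.
set N := nmax A B.
have L0 : 0 < Lmax A B by rewrite /Lmax lt_max La0.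
have Ane : A != [::] by apply/eqP => eA; move: La0; rewrite eA /bar_len big_nil ltxx.
have N0 : (0 < N)%N by rewrite /N /nmax (leq_trans _ (leq_maxl _ _)) // lt0n size_eq0.
have nN : 0 < nexp p N by case: p {p1} => [r||] /=; rewrite ?powR_gt0 // ltr0n.
set K := 4 * nexp p N / Lmax A B.
have K0 : 0 < K by rewrite /K !mulr_gt0 // invr_gt0.
have -> : 4 * nexp p N * dW p A B / Lmax A B = dW p A B * K by rewrite /K; ring.
rewrite -ler_pdivrMr //.
have sA : (size A <= N)%N by rewrite /N /nmax leq_maxl.
have sB : (size B <= N)%N by rewrite /N /nmax leq_maxr.
have NN : nmax (psi A) (psi B) = N by rewrite /nmax /psi !size_map.
apply: lb_le_inf.
  exists (match_cost p (A ++ diag (nseq (N - size A) 0)) (B ++ diag (nseq (N - size B) 0))).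
  exists (nseq (N - size A) 0), (nseq (N - size B) 0), (B ++ diag (nseq (N - size B) 0)).
  by split; rewrite ?size_nseq.
move=> c [ta [tb [B'' [hta htb hperm ->]]]].
rewrite ler_pdivrMr //.
set A' := A ++ diag ta.
set fA := fun iv : R * R => ((0:R), (iv.2 - iv.1) / bar_len A).
set fB := fun iv : R * R => ((0:R), (iv.2 - iv.1) / bar_len B).
have hA' : psi A ++ diag (nseq (size ta) 0) = map fA A'.
  by rewrite /A' map_cat map_diag.
have szA' : size A' = N by rewrite /A' size_cat size_map hta subnKC.
have szB'' : size B'' = N by rewrite (perm_size hperm) size_cat size_map htb subnKC.
have inS : [set c : R | exists (ta tb : seq R) (B'' : barcode R),
         [/\ size ta = (nmax (psi A) (psi B) - size (psi A))%N,
             size tb = (nmax (psi A) (psi B) - size (psi B))%N,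
             perm_eq B'' (psi B ++ diag tb) &
             c = match_cost p (psi A ++ diag ta) B'']]%classic (match_cost p (map fA A') (map fB B'')).
  exists (nseq (size ta) 0), (nseq (size tb) 0), (map fB B''); split.
  - by rewrite size_nseq NN /psi size_map.
  - by rewrite size_nseq NN /psi size_map.
  - have := perm_map fB hperm; rewrite map_cat map_diag //.
  - by rewrite hA'.
apply: le_trans (ge_inf _ inS) _.
  exists 0 => x [ta0 [tb0 [B0 [_ _ _ ->]]]]; exact: match_cost_ge0.
have := @key R p A' B'' (bar_len A) (bar_len B) p1 La0 Lb0.
rewrite szA' szB'' => /(_ erefl).
have bA' : is_barcode A' by rewrite /is_barcode all_cat; apply/andP; split; [exact: bA | exact: diag_barcode].
have bB'' : is_barcode B''.
  by rewrite /is_barcode (perm_all _ hperm) all_cat; apply/andP; split; [exact: bB | exact: diag_barcode].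
have eLA : bar_len A = bar_len A'.
  by have := diag_len ta; rewrite /A' /bar_len big_cat /= => ->; rewrite addr0.
have eLB : bar_len B = bar_len B''.
  by have := diag_len tb; rewrite /bar_len (perm_big _ hperm) big_cat /= => ->; rewrite addr0.
move=> /(_ bA' bB'' eLA eLB) /le_trans; apply.
by rewrite le_eqVlt; apply/orP; left; apply/eqP; rewrite /K /Lmax; ring.
Qed.
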